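(* Let $q\ge1$, $n=2^q$, and take the operator basis $\{\tilde E_\alpha\}$ of the $n\times n$ complex matrices to be the matrix units $\{n_{[ij]}\}_{1\le i,j\le n}$, indexing $\alpha$ by pairs $(i,j)$. Then there exist a density matrix $\rho$ on $\mathbb{C}^n\otimes\mathbb{C}^n$ and an operator $R=\sum_m a_m M_m^\dagger M_m$ (for some POVM $\{M_m\}$ and real numbers $a_m$) such that the tensor $A_{\alpha\beta\gamma\delta}=\mathrm{tr}\big[R(\tilde E_\alpha\otimes\tilde E_\gamma)\rho(\tilde E_\beta^\dagger\otimes\tilde E_\delta^\dagger)\big]$ is diagonal with nonzero diagonal entries, i.e. $A_{\alpha\beta\gamma\delta}=0$ whenever $(\alpha,\beta)\ne(\gamma,\delta)$, and $A_{\alpha\beta\alpha\beta}\ne0$ for all $\alpha,\beta$.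
   Context: $n_{[ij]}$ denotes the $n\times n$ matrix whose $(i,j)$ entry is $1$ and all other entries are $0$. In a two-player static quantum game, $\rho$ is the initial state shared between the two players (each holding one $\mathbb{C}^n$ factor), $\{M_m\}$ is the referee's POVM and $a_m$ the payoff to player I on outcome $m$, so that player I's payoff for chi-matrix strategies $\chi,\xi$ is $\sum_{\alpha,\beta,\gamma,\delta}\mathrm{Re}[\chi_{\alpha\beta}\xi_{\gamma\delta}A_{\alpha\beta\gamma\delta}]$. *)

(* Defs.v *)
From HB Require Import structures.
From mathcomp Require Import all_boot all_order all_algebra.
Set Implicit Arguments. Unset Strict Implicit. Unset Printing Implicit Defensive.
Import Order.TTheory GRing.Theory Num.Theory.
Local Open Scope ring_scope.

(* The index k : 'I_(m*n) of C^m (x) C^n corresponds to the pair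
   (i, j) : 'I_m * 'I_n via MathComp's mxvec_index convention. *)
Definition unpair_idx (m n : nat) (k : 'I_(m * n)) : 'I_m * 'I_n :=
  enum_val (cast_ord (esym (mxvec_cast m n)) k).

Definition tensmx (C : numClosedFieldType) (m1 n1 m2 n2 : nat)
  (A : 'M[C]_(m1, n1)) (B : 'M[C]_(m2, n2)) : 'M[C]_(m1 * m2, n1 * n2) :=
  \matrix_(k, l) (A (unpair_idx k).1 (unpair_idx l).1 *
                  B (unpair_idx k).2 (unpair_idx l).2).

Lemma tensmxE (C : numClosedFieldType) (m1 n1 m2 n2 : nat)
  (A : 'M[C]_(m1, n1)) (B : 'M[C]_(m2, n2)) i1 i2 j1 j2 :
  tensmx A B (mxvec_index i1 i2) (mxvec_index j1 j2) = A i1 j1 * B i2 j2.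
Proof. by rewrite mxE /unpair_idx /mxvec_index !cast_ordK !enum_rankK. Qed.

Definition adj (C : numClosedFieldType) (m n : nat) (A : 'M[C]_(m, n))
  : 'M[C]_(n, m) := (map_mx Num.conj A)^T.

Definition psdmx (C : numClosedFieldType) (N : nat) (A : 'M[C]_N) : Prop :=
  forall v : 'cV[C]_N, 0 <= (adj v *m A *m v) 0 0.

Definition density_mx (C : numClosedFieldType) (N : nat) (rho : 'M[C]_N)
  : Prop := adj rho = rho /\ psdmx rho /\ \tr rho = 1.

Definition povm (C : numClosedFieldType) (N k : nat) (M : 'I_k -> 'M[C]_N)
  : Prop := \sum_(m < k) adj (M m) *m M m = 1%:M.

Definition Eunit (C : numClosedFieldType) (n : nat) (al : 'I_n * 'I_n)
  : 'M[C]_n := delta_mx al.1 al.2.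

Definition Acoef (C : numClosedFieldType) (n : nat) (R rho : 'M[C]_(n * n))
  (al be ga de : 'I_n * 'I_n) : C :=
  \tr (R *m tensmx (Eunit C al) (Eunit C ga) *m rho
         *m tensmx (adj (Eunit C be)) (adj (Eunit C de))).

(* Main.v *)
Require Import Defs.
From HB Require Import structures.
From mathcomp Require Import all_boot all_order all_algebra.
Import Order.TTheory GRing.Theory Num.Theory.
Local Open Scope ring_scope.

Section H.
Variable C : numClosedFieldType.

Lemma unpair_mxvec m n (i : 'I_m) (j : 'I_n) :
  unpair_idx (mxvec_index i j) = (i, j).
Proof. by rewrite /unpair_idx /mxvec_index cast_ordK enum_rankK. Qed.

Lemma mxvec_index_eq m n (i i' : 'I_m) (j j' : 'I_n) :
  (mxvec_index i j == mxvec_index i' j') = (i == i') && (j == j').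
Proof.
apply/eqP/andP => [E|[/eqP-> /eqP->]] //.
have := congr1 (@unpair_idx m n) E; rewrite !unpair_mxvec => -[-> ->]; by [].
Qed.

Lemma tens_delta n (i j k l : 'I_n) :
  tensmx (delta_mx i j : 'M[C]_n) (delta_mx k l : 'M[C]_n)
  = delta_mx (mxvec_index i k) (mxvec_index j l).
Proof.
apply/matrixP => x y.
case/mxvec_indexP: x => i' k'; case/mxvec_indexP: y => j' l'.
rewrite tensmxE !mxE !mxvec_index_eq.
by case: (i' == i); case: (j' == j); case: (k' == k); case: (l' == l);
  rewrite ?mulr0 ?mul0r ?mulr1.
Qed.

Lemma adj_delta n (i j : 'I_n) : adj (delta_mx i j : 'M[C]_n) = delta_mx j i.
Proof.
apply/matrixP => x y; rewrite !mxE conjC_nat.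
by rewrite andbC.
Qed.

Lemma mul_delta_r m n p (X : 'M[C]_(m, n)) (a : 'I_n) (b : 'I_p) x y :
  (X *m delta_mx a b) x y = X x a * (y == b)%:R.
Proof.
rewrite !mxE (bigD1 a) //= big1 => [|z za]; last by rewrite !mxE (negbTE za) mulr0.
by rewrite !mxE eqxx addr0 andTb.
Qed.

Lemma tr_delta N (R rho : 'M[C]_N) a b c d :
  \tr (R *m delta_mx a b *m rho *m delta_mx c d) = R d a * rho b c.
Proof.
rewrite /mxtrace (bigD1 d) //= big1 => [|x xd]; last first.
  by rewrite mul_delta_r (negbTE xd) mulr0.
rewrite mul_delta_r eqxx mulr1 addr0 mxE (bigD1 b) //= big1 => [|z zb]; last first.
  by rewrite mul_delta_r (negbTE zb) mulr0 mul0r.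
by rewrite mul_delta_r eqxx mulr1 addr0.
Qed.

Lemma AcoefE n (R rho : 'M[C]_(n * n)) (al be ga de : 'I_n * 'I_n) :
  Acoef R rho al be ga de =
  R (mxvec_index be.1 de.1) (mxvec_index al.1 ga.1) *
  rho (mxvec_index al.2 ga.2) (mxvec_index be.2 de.2).
Proof. by rewrite /Acoef /Eunit !adj_delta !tens_delta tr_delta. Qed.

Lemma adjM m n p (A : 'M[C]_(m, n)) (B : 'M[C]_(n, p)) :
  adj (A *m B) = adj B *m adj A.
Proof. by rewrite /adj map_mxM trmx_mul. Qed.

Lemma adjK m n (A : 'M[C]_(m, n)) : adj (adj A) = A.
Proof. by rewrite /adj map_trmx trmxK map_mxCK. Qed.

Lemma adjZ m n (a : C) (A : 'M[C]_(m, n)) : adj (a *: A) = a^* *: adj A.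
Proof. by apply/matrixP => i j; rewrite !mxE rmorphM. Qed.

Lemma adjB m n (A B : 'M[C]_(m, n)) : adj (A - B) = adj A - adj B.
Proof. by apply/matrixP => i j; rewrite !mxE rmorphB. Qed.

Lemma adj1 n : adj (1%:M : 'M[C]_n) = 1%:M.
Proof. by apply/matrixP => i j; rewrite !mxE rmorph_nat eq_sym. Qed.

End H.
Theorem theorem3 (C : numClosedFieldType) (q n : nat) :
  (1 <= q)%N -> n = (2 ^ q)%N ->
  exists (rho : 'M[C]_(n * n)) (k : nat) (M : 'I_k -> 'M[C]_(n * n))
         (a : 'I_k -> C),
    [/\ density_mx rho, povm M, (forall m, a m \is Num.real) &
      let R := \sum_(m < k) a m *: (adj (M m) *m M m) in
      (forall al be ga de : 'I_n * 'I_n,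
          (al, be) <> (ga, de) -> Acoef R rho al be ga de = 0) /\
      (forall al be : 'I_n * 'I_n, Acoef R rho al be al be != 0)].
Proof.
move=> _ En; subst n; set n := (2 ^ q)%N.
have n0 : (0 < n)%N by rewrite expn_gt0.
pose i0 : 'I_n := Ordinal n0.
pose b (k : 'I_(n * n)) : bool := (unpair_idx k).1 == (unpair_idx k).2.
pose Phi : 'cV[C]_(n * n) := \col_k (b k)%:R.
pose N := (\sum_k (b k : nat))%N.
pose s : C := N%:R.
have Npos : (0 < N)%N.
  by rewrite /N (bigD1 (mxvec_index i0 i0)) //= /b unpair_mxvec eqxx.
have s0 : s != 0 by rewrite pnatr_eq0 -lt0n.
have hPhi : adj Phi *m Phi = s%:M.
  apply/matrixP => i j; rewrite !ord1 !mxE eqxx mulr1n /s natr_sum.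
  by apply: eq_bigr => k _; rewrite !mxE conjC_nat -natrM mulnb andbb.
pose P := s^-1 *: (Phi *m adj Phi).
have PE : forall k l, P k l = s^-1 * ((b k)%:R * (b l)%:R).
  by move=> k l; rewrite !mxE big_ord1 !mxE conjC_nat.
have adjP : adj P = P.
  by rewrite /P adjZ adjM adjK conj_Creal // rpredV realn.
have PP : P *m P = P.
  rewrite /P -scalemxAl -scalemxAr mulmxA -(mulmxA Phi) hPhi mul_mx_scalar.
  by rewrite -scalemxAl !scalerA mulVf // mulr1.
exists P, 2, (fun m => if m == ord0 then P else 1%:M - P),
  (fun m => if m == ord0 then 1 else 0).
split.
- split; first exact: adjP.
  split.
    move=> v; rewrite /P -scalemxAr -scalemxAl mxE.
    apply: mulr_ge0; first by rewrite invr_ge0 ler0n.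
    rewrite (mulmxA (adj v)) -(mulmxA (adj v *m Phi)).
    have -> : adj v *m Phi = adj (adj Phi *m v) by rewrite adjM adjK.
    set x := adj Phi *m v.
    rewrite mxE big_ord1 !mxE mulrC -normCK.
    by rewrite exprn_ge0.
  by rewrite mxtraceZ mxtrace_mulC hPhi mxtrace_scalar mulr1n mulVf.
- rewrite /povm big_ord_recr big_ord1 /= adjB adj1 adjP PP mulmxBl mul1mx.
  by rewrite !mulmxBr mulmx1 PP subrr subr0 addrC subrK.
- by move=> m; case: ifP => _; [exact: rpred1 | exact: rpred0].
move=> R.
have -> : R = P.
  by rewrite /R big_ord_recr big_ord1 /= scale1r scale0r addr0 adjP PP.
split.
  move=> [a1 a2] [b1 b2] [g1 g2] [d1 d2] H.
  rewrite AcoefE !PE /b !unpair_mxvec /=.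
  do 4 (case: eqP => [?|_]; last by rewrite ?(mul0r, mulr0)).
  by subst.
move=> al be; rewrite AcoefE !PE /b !unpair_mxvec /= !eqxx !mulr1.
by rewrite mulf_neq0 // invr_neq0.
Qed.
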